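(* Let $G=(V,E,w)$ be a connected weighted graph with $n$ vertices and let $e\in E$. Then $$ n\cdot w_e\cdot B_e^{2}=\sum_{\{s,t\}\subseteq V}\frac{f_{st}(e)^{2}}{w_e}, $$ where the sum is over unordered pairs of distinct vertices.
   Context: $G=(V,E,w)$ is an undirected graph with positive edge weights $w_e$. Each edge is given an arbitrary fixed orientation $(s,t)$; the boundary matrix $\partial\in\mathbb{R}^{|V|\times|E|}$ has column $\partial 1_e=1_s-1_t$ for $e=(s,t)$, where $1_x$ is the indicator vector of $x$. $W$ is the diagonal matrix of edge weights and $L=\partial W\partial^{T}$ is the graph Laplacian; $L^{+}$ is its Moore–Penrose pseudoinverse and $L^{2+}=(L^{+})^2$. The $st$-electrical flow is $f_{st}=W\partial^{T}L^{+}(1_s-1_t)\in\mathbb{R}^{E}$. The biharmonic distance is $B_{st}=\sqrt{(1_s-1_t)^{T}L^{2+}(1_s-1_t)}$ and $B_e:=B_{st}$ for $e=\{s,t\}$. *)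

(* Defs.v *)
From HB Require Import structures.
From mathcomp Require Import all_boot all_order all_algebra.
From mathcomp Require Import reals.
From Stdlib Require Import ClassicalEpsilon.
Set Implicit Arguments. Unset Strict Implicit. Unset Printing Implicit Defensive.
Import Order.TTheory GRing.Theory Num.Theory.
Local Open Scope ring_scope.

Section Graph.
Variable R : realType.
Variables (n m : nat).
Variables (src tgt : 'I_m -> 'I_n) (w : 'I_m -> R).

(* Moore-Penrose pseudoinverse: the (unique) X satisfying the Penrose equations. *)
Definition is_pinv (k : nat) (A X : 'M[R]_k) : Prop :=
  [/\ A *m X *m A = A, X *m A *m X = X,
      (A *m X)^T = A *m X & (X *m A)^T = X *m A].

Definition pinv (k : nat) (A : 'M[R]_k) : 'M[R]_k :=
  epsilon (inhabits 0) (is_pinv A).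

Definition boundary : 'M[R]_(n, m) :=
  \matrix_(i, e) ((i == src e)%:R - (i == tgt e)%:R).

Definition Wmx : 'M[R]_m := diag_mx (\row_e w e).

Definition laplacian : 'M[R]_n := boundary *m Wmx *m boundary^T.

Definition Lpinv : 'M[R]_n := pinv laplacian.

Definition chi (s t : 'I_n) : 'cV[R]_n := \col_i ((i == s)%:R - (i == t)%:R).

Definition eflow (s t : 'I_n) : 'cV[R]_m :=
  Wmx *m boundary^T *m Lpinv *m chi s t.

Definition biharm (s t : 'I_n) : R :=
  Num.sqrt (((chi s t)^T *m (Lpinv *m Lpinv) *m chi s t) 0 0).

Definition biharm_e (e : 'I_m) : R := biharm (src e) (tgt e).

Definition adj : rel 'I_n := fun u v =>
  [exists e, ((src e == u) && (tgt e == v)) || ((src e == v) && (tgt e == u))].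

Definition connected_graph : Prop := forall u v : 'I_n, connect adj u v.

Definition simple_graph : Prop :=
  (forall e, src e != tgt e) /\
  (forall e e', ((src e == src e') && (tgt e == tgt e')) ||
                ((src e == tgt e') && (tgt e == src e')) -> e = e').
End Graph.

(* Main.v *)
Require Import Defs.
From HB Require Import structures.
From mathcomp Require Import all_boot all_order all_algebra.
From mathcomp Require Import reals.
From mathcomp Require Import ring lra.
From Stdlib Require Import ClassicalEpsilon.
Import Order.TTheory GRing.Theory Num.Theory.
Local Open Scope ring_scope.

Lemma pinv_uniq (R : realType) k (A X Y : 'M[R]_k) :
  is_pinv A X -> is_pinv A Y -> X = Y.
Proof.
case=> [h1 h2 h3 h4] [g1 g2 g3 g4].
have e1 : X = X *m X^T *m A^T.
  by rewrite -{1}h2 -mulmxA -h3 trmx_mul mulmxA.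
have e2 : A^T = A^T *m (A *m Y).
  by rewrite -{1}g1 trmx_mul g3.
have eX : X = X *m A *m Y.
  rewrite {1}e1 e2 !mulmxA -[X *m X^T *m A^T]mulmxA -trmx_mul h3.
  by rewrite !mulmxA h2.
have f1 : Y = A^T *m Y^T *m Y.
  by rewrite -{1}g2 -g4 trmx_mul.
have f2 : A^T = X *m A *m A^T.
  by rewrite -{1}h1 -mulmxA trmx_mul h4.
have eY : Y = X *m A *m Y.
  rewrite {1}f1 f2 -[X *m A *m A^T *m Y^T]mulmxA -trmx_mul g4.
  by rewrite -!mulmxA [Y *m (A *m Y)]mulmxA g2.
by rewrite eX -eY.
Qed.

Lemma sum_delta (R : realType) k (F : 'I_k -> R) s :
  \sum_i F i * (i == s)%:R = F s.
Proof.
rewrite (bigD1 s) //= eqxx mulr1 big1 ?addr0 // => i /negbTE ->.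
by rewrite mulr0.
Qed.

Lemma sum_delta' (R : realType) k (F : 'I_k -> R) s :
  \sum_i (i == s)%:R * F i = F s.
Proof. by rewrite -(@sum_delta _ _ F s); apply: eq_bigr => i _; rewrite mulrC. Qed.

Lemma sum_half (R : realType) k (f : 'I_k -> 'I_k -> R) :
  (forall s t : 'I_k, f s t = f t s) -> (forall s : 'I_k, f s s = 0) ->
  \sum_(s < k) \sum_(t < k) f s t = 2%:R * \sum_(s < k) \sum_(t < k | (s < t)%N) f s t.
Proof.
move=> fsym fdiag.
have -> : \sum_(s < k) \sum_(t < k) f s t =
   \sum_(s < k) \sum_(t < k) (if (s < t)%N then f s t else 0) +
   \sum_(s < k) \sum_(t < k) (if (t < s)%N then f s t else 0).
  rewrite -big_split /=; apply: eq_bigr => s _.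
  rewrite -big_split /=; apply: eq_bigr => t _.
  case: ltngtP => [||/val_inj ->]; rewrite ?addr0 ?add0r ?fdiag //.
rewrite [X in _ + X]exchange_big /=.
have -> : \sum_(t < k) \sum_(s < k) (if (t < s)%N then f s t else 0) =
          \sum_(s < k) \sum_(t < k) (if (s < t)%N then f s t else 0).
  apply: eq_bigr => s _; apply: eq_bigr => t _; by rewrite fsym.
have -> : \sum_(s < k) \sum_(t < k | (s < t)%N) f s t =
          \sum_(s < k) \sum_(t < k) (if (s < t)%N then f s t else 0).
  by apply: eq_bigr => s _; rewrite big_mkcond.
ring.
Qed.

Lemma sum_ind (R : realType) k (s : 'I_k) : \sum_i (i == s)%:R = 1 :> R.
Proof.
by rewrite (bigD1 s) //= eqxx big1 ?addr0 // => i /negbTE ->.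
Qed.

Section Main.
Variable R : realType.
Variables (n m : nat) (src tgt : 'I_m -> 'I_n) (w : 'I_m -> R).
Hypothesis wpos : forall e, 0 < w e.
Hypothesis conn : connected_graph src tgt.
Variable e0 : 'I_m.

Local Notation B := (boundary R src tgt : 'M[R]_(n, m)).
Local Notation W := (Wmx w).
Local Notation L := (laplacian src tgt w).
Local Notation J := (const_mx 1 : 'M[R]_n).

Lemma n_gt0 : (0 < n)%N.
Proof. exact: (leq_ltn_trans (leq0n _) (ltn_ord (src e0))). Qed.

Lemma nR_neq0 : (n%:R : R) != 0.
Proof. by rewrite pnatr_eq0 -lt0n n_gt0. Qed.

Lemma trL : L^T = L.
Proof.
by rewrite /laplacian !trmx_mul trmxK /Wmx tr_diag_mx mulmxA.
Qed.

Lemma BtJ : B^T *m J = 0.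
Proof.
apply/matrixP => i j; rewrite !mxE.
under eq_bigr => k _ do rewrite !mxE mulr1.
by rewrite sumrB !sum_ind subrr.
Qed.

Lemma LJ : L *m J = 0.
Proof. by rewrite /laplacian -mulmxA BtJ mulmx0. Qed.

Lemma JL : J *m L = 0.
Proof. by apply: trmx_inj; rewrite trmx_mul trL trmx_const LJ trmx0. Qed.

Lemma JJ : J *m J = n%:R *: J.
Proof.
apply/matrixP => i j; rewrite !mxE.
under eq_bigr => k _ do rewrite !mxE mulr1.
by rewrite sumr_const card_ord mulr1.
Qed.

Local Notation c := ((n%:R : R)^-1).
Local Notation M := (L + c *: J).

Lemma MJ : M *m J = J.
Proof. by rewrite mulmxDl LJ add0r -scalemxAl JJ scalerA mulVf ?nR_neq0 ?scale1r. Qed.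

Lemma JM : J *m M = J.
Proof. by rewrite mulmxDr JL add0r -scalemxAr JJ scalerA mulVf ?nR_neq0 ?scale1r. Qed.

Lemma trM : M^T = M.
Proof. by rewrite raddfD /= linearZ /= trL trmx_const. Qed.

Lemma M_unit : M \in unitmx.
Proof.
rewrite -row_free_unit -kermx_eq0; apply/rowV0P => v /sub_kermxP vM0.
have vJ : v *m J = 0 by rewrite -MJ mulmxA vM0 mul0mx.
have vL : v *m L = 0.
  by move: vM0; rewrite mulmxDr -scalemxAr vJ scaler0 addr0.
pose u := v *m B.
have q0 : (u *m W *m u^T) 0 0 = 0.
  have -> : u *m W *m u^T = v *m L *m v^T by rewrite /u /laplacian trmx_mul !mulmxA.
  by rewrite vL mul0mx mxE.
have uE : forall e, u 0 e = v 0 (src e) - v 0 (tgt e).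
  move=> e; rewrite /u mxE.
  under eq_bigr => k _ do rewrite mxE mulrBr.
  by rewrite sumrB !sum_delta.
clearbody u.
have ue : forall e, u 0 e = 0.
  move: q0; rewrite /Wmx mul_mx_diag mxE => q0 e.
  have h : forall k, 0 <= u 0 k * w k * u 0 k.
    by move=> k; rewrite mulrAC -expr2 mulr_ge0 ?sqr_ge0 // ltW.
  move: q0; under eq_bigr => k _ do rewrite !mxE.
  move=> q0; have := psumr_eq0P (fun k _ => h k) q0 (i:=e) isT.
  rewrite mulrAC -expr2; move/eqP; rewrite mulf_eq0 (gt_eqF (wpos e)) orbF.
  by rewrite sqrf_eq0 => /eqP.
have ve : forall e, v 0 (src e) = v 0 (tgt e).
  move=> e; apply/eqP; rewrite -subr_eq0; apply/eqP.
  by rewrite -uE ue.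
have vconst : forall x, v 0 x = v 0 (src e0).
  move=> x; have /connectP [p pth ->] := conn (src e0) x.
  elim: p (src e0) pth => [//|y p IH] a /= /andP [ay py].
  rewrite IH //.
  case/existsP: ay => e /orP [] /andP [/eqP <- /eqP <-] //; by rewrite ve.
have va : v 0 (src e0) = 0.
  have := congr1 (fun A : 'M[R]_(1, n) => A 0 (src e0)) vJ; rewrite !mxE /=.
  under eq_bigr => k _ do rewrite mxE mulr1 vconst.
  rewrite sumr_const card_ord => /eqP; rewrite -mulr_natr mulf_eq0.
  by rewrite (negbTE nR_neq0) orbF => /eqP.
by apply/rowP => x; rewrite vconst va mxE.
Qed.

Local Notation P := (invmx M - c *: J).

Lemma iMJ : invmx M *m J = J.
Proof.
have h := congr1 (mulmx (invmx M)) MJ.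
by rewrite mulmxA mulVmx ?M_unit // mul1mx in h.
Qed.

Lemma JiM : J *m invmx M = J.
Proof.
have h := congr1 (mulmxr (invmx M)) JM; rewrite /= in h.
by rewrite -mulmxA mulmxV ?M_unit // mulmx1 in h.
Qed.

Lemma cJJ : c *: (J *m J) = J.
Proof. by rewrite JJ scalerA mulVf ?nR_neq0 ?scale1r. Qed.

Lemma LP : L *m P = 1%:M - c *: J.
Proof.
have eL : L = M - c *: J by rewrite addrK.
rewrite mulmxBr -scalemxAr LJ scaler0 subr0 {1}eL mulmxBl mulmxV ?M_unit //.
by rewrite -scalemxAl JiM.
Qed.

Lemma PL : P *m L = 1%:M - c *: J.
Proof.
have eL : L = M - c *: J by rewrite addrK.
rewrite mulmxBl -scalemxAl JL scaler0 subr0 {2}eL mulmxBr mulVmx ?M_unit //.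
by rewrite -scalemxAr iMJ.
Qed.

Lemma JP : J *m P = 0.
Proof. by rewrite mulmxBr JiM -scalemxAr cJJ subrr. Qed.

Lemma PJ : P *m J = 0.
Proof. by rewrite mulmxBl iMJ -scalemxAl cJJ subrr. Qed.

Lemma trP : P^T = P.
Proof. by rewrite raddfB /= linearZ /= trmx_inv trM trmx_const. Qed.

Lemma is_pinv_P : is_pinv L P.
Proof.
split.
- by rewrite LP mulmxBl mul1mx -scalemxAl JL scaler0 subr0.
- by rewrite PL mulmxBl mul1mx -scalemxAl JP scaler0 subr0.
- by rewrite LP raddfB /= trmx1 linearZ /= trmx_const.
- by rewrite PL raddfB /= trmx1 linearZ /= trmx_const.
Qed.

Lemma Lpinv_eq : Lpinv src tgt w = P.
Proof.
rewrite /Lpinv /pinv; apply: (@pinv_uniq R n L _ _ _ is_pinv_P).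
by apply: epsilon_spec; exists P; exact: is_pinv_P.
Qed.

Lemma main_sec :
    n%:R * w e0 * (biharm_e src tgt w e0) ^+ 2 =
    \sum_(s < n) \sum_(t < n | (s < t)%N)
       ((eflow src tgt w s t) e0 0) ^+ 2 / w e0.
Proof.
pose b := col e0 B.
pose x := P *m b.
have xE' : forall i, (P *m B) i e0 = x i 0 by move=> i; rewrite /x /b !mxE; apply: eq_bigr => k _; rewrite [col _ _ _ _]mxE.
have flow : forall s t, eflow src tgt w s t e0 0 = w e0 * (x s 0 - x t 0).
  move=> s t; rewrite /eflow Lpinv_eq /Wmx -!mulmxA mul_diag_mx mxE mxE.
  congr (_ * _).
  rewrite mulmxA -[B^T *m P]trmxK trmx_mul trmxK trP mxE.
  under eq_bigr => i _ do rewrite [_^T _ _]mxE xE' [chi _ _ _ _ _]mxE mulrBr.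
  by rewrite sumrB !sum_delta.
pose Q := \sum_i x i 0 ^+ 2.
have Q0 : 0 <= Q by apply: sumr_ge0 => i _; exact: sqr_ge0.
have bih : biharm_e src tgt w e0 ^+ 2 = Q.
  rewrite /biharm_e /biharm Lpinv_eq.
  have -> : chi R (src e0) (tgt e0) = b by apply/matrixP => i j; rewrite !mxE.
  have -> : b^T *m (P *m P) *m b = x^T *m x by rewrite trmx_mul trP !mulmxA.
  rewrite sqr_sqrtr mxE.
    by apply: eq_bigr => i _; rewrite mxE expr2.
  by under eq_bigr => i _ do rewrite mxE -expr2.
have Sx : \sum_i x i 0 = 0.
  have : J *m x = 0 by rewrite /x mulmxA JP mul0mx.
  move/(congr1 (fun A : 'M[R]_(n, 1) => A (src e0) 0)); rewrite !mxE.
  by under eq_bigr => i _ do rewrite mxE mul1r.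
have inner : forall s, \sum_t (x s 0 - x t 0) ^+ 2 = n%:R * x s 0 ^+ 2 + Q.
  move=> s; under eq_bigr => t _ do rewrite sqrrB.
  rewrite big_split /= sumrB sumr_const card_ord sumrMnl -mulr_sumr Sx mulr0.
  by rewrite mul0rn subr0 mulr_natl.
have full : \sum_(s < n) \sum_(t < n) (x s 0 - x t 0) ^+ 2 = 2%:R * (n%:R * Q).
  under eq_bigr => s _ do rewrite inner.
  by rewrite big_split /= -mulr_sumr sumr_const card_ord -/Q -[Q *+ n]mulr_natl; ring.
rewrite sum_half in full; last 2 first.
- by move=> s t; rewrite -sqrrN opprB.
- by move=> s; rewrite subrr expr2 mul0r.
have H : \sum_(s < n) \sum_(t < n | (s < t)%N) (x s 0 - x t 0) ^+ 2 = n%:R * Q.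
  by apply: (mulfI (_ : 2%:R != 0 :> R)) => //; rewrite pnatr_eq0.
rewrite bih.
under eq_bigr => s _ do under eq_bigr => t _ do rewrite flow.
have wne : w e0 != 0 by rewrite gt_eqF.
transitivity (w e0 * \sum_(s < n) \sum_(t < n | (s < t)%N) (x s 0 - x t 0) ^+ 2).
  by rewrite H; ring.
rewrite mulr_sumr; apply: eq_bigr => s _; rewrite mulr_sumr; apply: eq_bigr => t _.
by field.
Qed.

End Main.

Theorem theorem4p1 (R : realType) (n m : nat) (src tgt : 'I_m -> 'I_n)
  (w : 'I_m -> R) :
  (forall e, 0 < w e) ->
  simple_graph src tgt ->
  connected_graph src tgt ->
  forall e : 'I_m,
    n%:R * w e * (biharm_e src tgt w e) ^+ 2 =
    \sum_(s < n) \sum_(t < n | (s < t)%N)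
       ((eflow src tgt w s t) e 0) ^+ 2 / w e.
Proof. by move=> wpos _ conn e; apply: main_sec. Qed.
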